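(* For every integer $\kappa\geq 1$ and every $z\ge1$, \[ F_{\kappa+1}(z) \geq \frac{P(\kappa)}{P(\kappa+1)}\prod_{p\leq \kappa+1}\left(1-\frac{1}{p}\right)\sum_{\substack{\ell\leq z\\(\ell,P(\kappa+1))=1}}\mu^2(\ell)\frac{\tau_\kappa(\ell)}{\psi_{\kappa+1}(\ell)\,\ell}\int_1^{z/\ell}\frac{F_\kappa(t)}{t}\,dt.\]
   Context: For $y>0$ let $P(y)=\prod_{p\le y}p$. For an integer $k\ge1$ and $y>0$, $F_k(y)=\sum_{q\leq y,\ (q,P(k))=1}\mu^2(q)\prod_{p\mid q}\frac{k}{p-k}$. $\tau_n(m)$ is the number of ordered $n$-tuples $(d_1,\dots,d_n)$ of positive integers with $d_1\cdots d_n=m$, and $\psi_n(m)=\prod_{p\mid m,\ p>n}(p-n)$. *)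

(* Defs.v *)
From Stdlib Require Import Reals.
From Coquelicot Require Import Coquelicot.
From mathcomp Require Import ssreflect ssrfun ssrbool eqtype ssrnat seq div
  fintype tuple bigop prime finset.
Set Implicit Arguments.
Unset Strict Implicit.
Unset Printing Implicit Defensive.

Definition nat_le_R (n : nat) (y : R) : bool :=
  if Rle_dec (INR n) y then true else false.

(* the positive integers q with q <= y (y real); iota 1 N with N >= y covers them *)
Definition nats_upto (y : R) : seq nat :=
  [seq q <- iota 1 (Z.to_nat (up y)) | nat_le_R q y].

Definition Pprod (k : nat) : nat := (\prod_(p < k.+1 | prime p) p)%N.

Definition squarefree (q : nat) : bool :=
  (0 < q)%N && all (fun p => logn p q == 1%N) (primes q).
Definition mu2 (q : nat) : R := if squarefree q then 1%R else 0%R.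

Definition Rsum_seq {T} (s : seq T) (f : T -> R) : R := foldr (fun x acc => f x + acc)%R 0%R s.
Definition Rprod_seq {T} (s : seq T) (f : T -> R) : R := foldr (fun x acc => f x * acc)%R 1%R s.

Definition Fk (k : nat) (y : R) : R :=
  Rsum_seq [seq q <- nats_upto y | coprime q (Pprod k)]
    (fun q => mu2 q * Rprod_seq (primes q) (fun p => INR k / (INR p - INR k)))%R.

(* tau_n(m) = number of ordered n-tuples (d_1,...,d_n) of positive integers with
   d_1 ... d_n = m.  For m >= 1 every such d_i lies in {1,...,m}, so we count
   n-tuples over 'I_(m+1) with product m (a zero entry would give product 0 <> m). *)
Definition tau (n m : nat) : nat :=
  #|[set t : n.-tuple 'I_m.+1 | (\prod_(i <- t) (i : nat))%N == m]|.

Definition psi (n m : nat) : nat := (\prod_(p <- primes m | (n < p)%N) (p - n))%N.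

(* Main.v *)
Require Import Defs.
From Stdlib Require Import Reals Lra Lia ZArith.
From Coquelicot Require Import Coquelicot.
From HB Require Import structures.
From mathcomp Require Import ssreflect ssrfun ssrbool eqtype ssrnat seq div fintype tuple finfun bigop prime finset.
From mathcomp Require Import zify.
Open Scope R_scope.
Lemma RpA : associative Rplus. Proof. move=> x y z; lra. Qed.
Lemma RpC : commutative Rplus. Proof. move=> x y; lra. Qed.
Lemma Rp0l : left_id 0 Rplus. Proof. move=> x; lra. Qed.
HB.instance Definition _ := Monoid.isComLaw.Build R 0 Rplus RpA RpC Rp0l.
Lemma RmA : associative Rmult. Proof. move=> x y z; ring. Qed.
Lemma RmC : commutative Rmult. Proof. move=> x y; ring. Qed.
Lemma Rm1l : left_id 1 Rmult. Proof. move=> x; ring. Qed.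
HB.instance Definition _ := Monoid.isComLaw.Build R 1 Rmult RmA RmC Rm1l.
Lemma Rm0l : left_zero 0 Rmult. Proof. move=> x; ring. Qed.
Lemma Rm0r : right_zero 0 Rmult. Proof. move=> x; ring. Qed.
HB.instance Definition _ := Monoid.isMulLaw.Build R 0 Rmult Rm0l Rm0r.
Lemma RDl : left_distributive Rmult Rplus. Proof. move=> x y z; ring. Qed.
Lemma RDr : right_distributive Rmult Rplus. Proof. move=> x y z; ring. Qed.
HB.instance Definition _ := Monoid.isAddLaw.Build R Rmult Rplus RDl RDr.
Set Implicit Arguments.
Unset Strict Implicit.

Lemma Rsum_big T (s : seq T) f : Rsum_seq s f = \big[Rplus/0]_(x <- s) f x.
Proof. elim: s => [|a s IH]; first by rewrite big_nil. by rewrite big_cons /= IH. Qed.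
Lemma Rprod_big T (s : seq T) f : Rprod_seq s f = \big[Rmult/1]_(x <- s) f x.
Proof. elim: s => [|a s IH]; first by rewrite big_nil. by rewrite big_cons /= IH. Qed.

Lemma prime_dvd_Pprod p k : prime p -> (p <= k)%N -> (p %| Pprod k)%N.
Proof.
move=> pp pk; rewrite /Pprod.
have pk1 : (p < k.+1)%N by [].
rewrite (bigD1 (Ordinal pk1)) //=; exact: dvdn_mulr.
Qed.

Lemma coprime_prime_Pprod p k : prime p -> coprime p (Pprod k) = (k < p)%N.
Proof.
move=> pp; case: (ltnP k p) => kp.
  rewrite /Pprod; apply big_ind; [exact: coprimen1 | by move=> x y; rewrite coprimeMr => -> -> |].
  move=> i pi; rewrite prime_coprime //; apply/negP => /dvdnP [m hm].
  have : (p <= i)%N.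
    by apply: dvdn_leq; [exact: prime_gt0 | rewrite hm dvdn_mull].
  have := ltn_ord i; move=> a b; lia.
apply/negP; rewrite prime_coprime // => /negP; apply; exact: prime_dvd_Pprod.
Qed.

Lemma primes_gt_of_coprime n k p : coprime n (Pprod k) -> p \in primes n -> (k < p)%N.
Proof.
move=> co; rewrite mem_primes => /and3P [pp n0 pn].
rewrite -coprime_prime_Pprod //; exact: coprime_dvdl pn co.
Qed.

Definition wt (k : nat) (c : nat -> R) (n : nat) : R :=
  if coprime n (Pprod k) && squarefree n then \big[Rmult/1]_(p <- primes n) c p else 0.
Definition wl (k : nat) (c : nat -> R) (p e : nat) : R :=
  if e == 0%N then 1 else if e == 1%N then (if (k < p)%N then c p else 0) else 0.

Lemma primes_pm p e m : prime p -> (0 < e)%N -> (0 < m)%N -> ~~ (p %| m)%N ->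
  perm_eq (primes (p ^ e * m)) (p :: primes m).
Proof.
move=> pp e0 m0 pm; apply: uniq_perm; first exact: primes_uniq.
  rewrite /= primes_uniq andbT mem_primes pp m0 /=; exact: pm.
move=> q; rewrite primesM //; last by rewrite expn_gt0 prime_gt0.
rewrite primesX // primes_prime //.
by rewrite !inE.
Qed.

Lemma logn_pm q p e m : prime p -> (0 < m)%N -> ~~ (p %| m)%N ->
  logn q (p ^ e * m) = ((if q == p then e else 0) + logn q m)%N.
Proof.
move=> pp m0 pm; rewrite lognM //; last by rewrite expn_gt0 prime_gt0.
rewrite lognX logn_prime //; by case: (q == p); rewrite ?muln1 ?muln0.
Qed.

Lemma wt_mult k c p e m : prime p -> (0 < m)%N -> ~~ (p %| m)%N ->
  wt k c (p ^ e * m) = wl k c p e * wt k c m.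
Proof.
move=> pp m0 pm; rewrite /wl /wt.
case: e => [|e]; first by rewrite expn0 mul1n /=; ring.
have pe := primes_pm pp (ltn0Sn e) m0 pm.
have sq : squarefree (p ^ e.+1 * m) = (e == 0%N) && squarefree m.
  rewrite /squarefree muln_gt0 expn_gt0 prime_gt0 // m0 /= (eq_all_r (perm_mem pe)) /=.
  rewrite logn_pm // eqxx logn_coprime ?prime_coprime // addn0 eqSS.
  case: (e == 0%N) => //=; apply: eq_in_all => q qm.
  rewrite logn_pm //; case: (eqVneq q p) => [qp|qp] //.
  by move: qm; rewrite qp mem_primes pp m0 /= (negbTE pm).
rewrite sq coprimeMl coprime_pexpl // coprime_prime_Pprod //.
case: e pe sq => [|e] pe sq /=; last by rewrite andbF; ring.
case: (ltnP k p) => kp /=; last by ring.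
case: (_ && _) => //; last by ring.
by rewrite (perm_big _ pe) big_cons.
Qed.

Definition sm (j x : nat) : bool := all (fun p => (p < j)%N) (primes x).

Lemma sum_pick (s : seq nat) v (G : R) : uniq s -> v \in s ->
  \big[Rplus/0]_(e <- s) (if v == e then G else 0) = G.
Proof.
move=> us vs; rewrite (bigD1_seq v) //= eqxx big1 ?Rplus_0_r // => i /negbTE.
by rewrite eq_sym => ->.
Qed.

Lemma logn_le_self p x : prime p -> (0 < x)%N -> (logn p x < x)%N.
Proof.
move=> pp x0; apply: (@leq_trans (p ^ logn p x)).
  by apply: ltn_expl; exact: prime_gt1.
by apply: dvdn_leq => //; exact: pfactor_dvdnn.
Qed.

Lemma SVS (p N : nat) (F : nat -> R) : prime p ->
 \big[Rplus/0]_(x <- iota 1 N | sm p.+1 x) F x =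
 \big[Rplus/0]_(e <- iota 0 N.+1)
   \big[Rplus/0]_(x <- iota 1 N | sm p x) (if (p ^ e * x <= N)%N then F (p ^ e * x)%N else 0).
Proof.
move=> pp.
have pe0 e : (0 < p ^ e)%N by rewrite expn_gt0 prime_gt0.
transitivity (\big[Rplus/0]_(x <- iota 1 N | sm p.+1 x)
   \big[Rplus/0]_(e <- iota 0 N.+1) (if logn p x == e then F x else 0)).
  rewrite big_seq_cond [RHS]big_seq_cond; apply: eq_bigr => x /andP [xi _].
  rewrite sum_pick ?iota_uniq // mem_iota /=; move: xi; rewrite mem_iota => /andP [x1 xN].
  have := logn_le_self pp x1; lia.
rewrite exchange_big; apply: eq_bigr => e _.
rewrite -big_mkcondr -big_filter.
rewrite -[in RHS]big_mkcondr -[in RHS]big_filter.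
rewrite -(big_map (fun x => p ^ e * x)%N xpredT F).
apply: perm_big; apply: uniq_perm.
- by apply: filter_uniq; exact: iota_uniq.
- rewrite map_inj_uniq; first by apply: filter_uniq; exact: iota_uniq.
  by move=> a b /eqP; rewrite eqn_pmul2l // => /eqP.
move=> y; rewrite mem_filter mem_iota.
apply/idP/idP.
- move=> /and3P [/andP [smy /eqP ly] y1 yN].
  have y0 : (0 < y)%N by lia.
  have dv : (p ^ e %| y)%N by rewrite -ly pfactor_dvdnn.
  have ey : y = (p ^ e * (y %/ p ^ e))%N by rewrite mulnC divnK.
  apply/mapP; exists (y %/ p ^ e)%N => //.
  have x0 : (0 < y %/ p ^ e)%N by rewrite divn_gt0 // dvdn_leq.
  have lx : logn p (y %/ p ^ e) = 0%N.
    move: ly; rewrite {1}ey lognM // pfactorK //; lia.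
  rewrite mem_filter mem_iota -ey; apply/and3P; split.
  + apply/andP; split; last by lia.
    apply/allP => q qx; move/allP: smy => /(_ q).
    have : q \in primes y.
      move: qx; rewrite !mem_primes => /and3P [-> _ qd] /=; rewrite y0 /=.
      by apply: (dvdn_trans qd); exact: dvdn_div.
    move=> qy /(_ qy); rewrite ltnS leq_eqVlt => /orP [/eqP qp|//].
    by move: qx; rewrite -logn_gt0 qp lx.
  + by [].
  + have := leq_div y (p ^ e); lia.
- case/mapP => x; rewrite mem_filter mem_iota => /and3P [/andP [smx xN'] x1 xN] ->.
  have x0 : (0 < x)%N by lia.
  have px : ~~ (p %| x)%N.
    apply/negP => px; move/allP: smx => /(_ p); rewrite mem_primes pp x0 px ltnn.
    by move=> /(_ isT).
  apply/and3P; split.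
  + apply/andP; split.
    * apply/allP => q; rewrite primesM // => /orP [|qx].
        case: e {xN'} => [|e']; first by rewrite expn0 /= in_nil.
        by rewrite primesX // primes_prime // mem_seq1 => /eqP ->.
      by move/allP: smx => /(_ q qx) /ltnW.
    * rewrite logn_pm // eqxx logn_coprime ?addn0 // prime_coprime //.
  + have := pe0 e; have : (x <= p ^ e * x)%N by rewrite leq_pmull. lia.
  + lia.
Qed.

Lemma INR_muln m n : INR (m * n)%N = INR m * INR n.
Proof. exact: mult_INR. Qed.

Lemma sum_le (T : eqType) (s : seq T) (P : pred T) (f g : T -> R) :
  (forall x, x \in s -> P x -> f x <= g x) ->
  \big[Rplus/0]_(x <- s | P x) f x <= \big[Rplus/0]_(x <- s | P x) g x.
Proof.
move=> h; rewrite big_seq_cond [X in _ <= X]big_seq_cond.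
apply: (big_ind2 (fun a b => a <= b)); [lra | move=> *; lra |].
by move=> x /andP [xs px]; apply: h.
Qed.

Lemma sum_ge0 (T : eqType) (s : seq T) (P : pred T) (f : T -> R) :
  (forall x, x \in s -> P x -> 0 <= f x) -> 0 <= \big[Rplus/0]_(x <- s | P x) f x.
Proof.
move=> h; rewrite big_seq_cond; apply: (big_ind (fun a => 0 <= a)); [lra | move=> *; lra |].
by move=> x /andP [xs px]; apply: h.
Qed.

Definition good (G : R -> R) :=
  [/\ forall Y, 0 <= G Y, forall Y1 Y2, Y1 <= Y2 -> G Y1 <= G Y2 & forall Y, Y < 1 -> G Y = 0].

Definition H (N : nat) (w : nat -> R) (G : R -> R) (j : nat) (Y : R) : R :=
  \big[Rplus/0]_(x <- iota 1 N | sm j x) (w x * G (Y / INR x)).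

Lemma INR_pos_iota x N : x \in iota 1 N -> 0 < INR x /\ 1 <= INR x.
Proof.
rewrite mem_iota => /andP [x1 _]; split; first by apply: lt_0_INR; apply/ltP.
by apply: (le_INR 1); apply/leP.
Qed.

Lemma H_good N w G j : (forall x, 0 <= w x) -> good G -> good (H N w G j).
Proof.
move=> w0 [G0 Gm Gz]; split.
- move=> Y; rewrite /H; apply: sum_ge0 => x _ _; apply: Rmult_le_pos => //.
- move=> Y1 Y2 le; rewrite /H; apply: sum_le => x xs _; apply: Rmult_le_compat_l => //.
  apply: Gm; have [xp _] := INR_pos_iota xs; unfold Rdiv.
  apply: Rmult_le_compat_r => //; left; exact: Rinv_0_lt_compat.
- move=> Y Y1; rewrite /H big_seq_cond big1 // => x /andP [xs _].
  have [xp x1] := INR_pos_iota xs; rewrite Gz; first ring.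
  apply (Rmult_lt_reg_r (INR x)) => //; field_simplify; try lra; nra.
Qed.

Lemma INR_pexp_pos p e : prime p -> 0 < INR (p ^ e).
Proof. move=> pp; apply: lt_0_INR; apply/ltP; by rewrite expn_gt0 prime_gt0. Qed.

Lemma STEP_le N (w : nat -> R) (wl : nat -> R) G p Y : prime p ->
  (forall x, 0 <= w x) -> (forall e, 0 <= wl e) -> (forall Y, 0 <= G Y) ->
  (forall e x, (0 < x)%N -> sm p x -> w (p ^ e * x)%N = wl e * w x) ->
  H N w G p.+1 Y <= \big[Rplus/0]_(e <- iota 0 N.+1) (wl e * H N w G p (Y / INR (p ^ e))).
Proof.
move=> pp w0 wl0 G0 wm; rewrite /H SVS //; apply: sum_le => e _ _.
rewrite big_distrr; apply: sum_le => x xs smx.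
have [xp _] := INR_pos_iota xs.
have pe := INR_pexp_pos e pp.
case: ifP => _.
- rewrite wm //; last by move: xs; rewrite mem_iota; case/andP.
  rewrite INR_muln.
  have -> : Y / (INR (p ^ e) * INR x) = Y / INR (p ^ e) / INR x by field; lra.
  right; simpl; ring.
- simpl; apply: Rmult_le_pos => //; apply: Rmult_le_pos => //.
Qed.

Lemma STEP_eq N (w : nat -> R) (wl : nat -> R) G p Y : prime p ->
  good G -> Y <= INR N ->
  (forall e x, (0 < x)%N -> sm p x -> w (p ^ e * x)%N = wl e * w x) ->
  H N w G p.+1 Y = \big[Rplus/0]_(e <- iota 0 N.+1) (wl e * H N w G p (Y / INR (p ^ e))).
Proof.
move=> pp [G0 Gm Gz] YN wm; rewrite /H SVS //; apply: eq_bigr => e _.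
rewrite big_distrr big_seq_cond [RHS]big_seq_cond; apply: eq_bigr => x /andP [xs smx].
have [xp _] := INR_pos_iota xs.
have pe := INR_pexp_pos e pp.
case: ifP => hN.
- rewrite wm //; last by move: xs; rewrite mem_iota; case/andP.
  rewrite INR_muln.
  have -> : Y / (INR (p ^ e) * INR x) = Y / INR (p ^ e) / INR x by field; lra.
  simpl; ring.
- rewrite Gz; first by simpl; ring.
  have : INR N < INR (p ^ e) * INR x.
    rewrite -INR_muln; apply: lt_INR; apply/ltP; by rewrite ltnNge hN.
  move=> h; apply (Rmult_lt_reg_r (INR x)) => //.
  have -> : Y / INR (p ^ e) / INR x * INR x = Y / INR (p ^ e) by field; lra.
  apply (Rmult_lt_reg_r (INR (p ^ e))) => //.
  have -> : Y / INR (p ^ e) * INR (p ^ e) = Y by field; lra.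
  nra.
Qed.

Lemma div_lt1 Y d : Y < 1 -> 1 <= d -> Y / d < 1.
Proof.
move=> hY hd; apply (Rmult_lt_reg_r d); first lra.
have -> : Y / d * d = Y by field; lra.
case: (Rle_lt_dec Y 0) => h; nra.
Qed.

Lemma BND N (S : R -> R) (wl : nat -> R) p Y : prime p -> good S ->
  (forall e, 0 <= wl e) -> wl 0%N = 1 ->
  \big[Rplus/0]_(e <- iota 0 N.+1) (wl e * S (Y / INR (p ^ e))) <=
  S Y + \big[Rplus/0]_(e <- iota 1 N) wl e * S (Y / INR p).
Proof.
move=> pp [S0 Sm Sz] wl0 w01.
rewrite big_cons w01 expn0 /= big_distrl.
have -> : Y / 1 = Y by field.
apply: Rplus_le_compat; first lra.
apply: sum_le => e; rewrite mem_iota => /andP [e1 _] _.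
apply: Rmult_le_compat_l => //.
have pe := INR_pexp_pos e pp.
have p1 : 1 < INR p by apply: (lt_INR 1); apply/ltP; exact: prime_gt1.
have pep : INR p <= INR (p ^ e).
  apply: le_INR; apply/leP; rewrite -{1}(expn1 p); apply: leq_pexp2l => //; exact: prime_gt0.
case: (Rlt_le_dec Y 1) => hY.
- rewrite Sz; first exact: S0.
  case: (Rle_lt_dec Y 0) => hY0.
  + apply: (Rle_lt_trans _ 0); last lra.
    unfold Rdiv; apply: Rmult_le_0_r => //; left; exact: Rinv_0_lt_compat.
  + apply (Rmult_lt_reg_r (INR (p ^ e))) => //.
    have -> : Y / INR (p ^ e) * INR (p ^ e) = Y by field; lra.
    nra.
- apply: Sm; unfold Rdiv; apply: Rmult_le_compat_l; first lra.
  apply: Rinv_le_contravar => //; lra.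
Qed.

Lemma good_div S p : prime p -> good S -> good (fun Y => S (Y / INR p)).
Proof.
move=> pp [S0 Sm Sz].
have p1 : 1 < INR p by apply: (lt_INR 1); apply/ltP; exact: prime_gt1.
split => //.
- move=> Y1 Y2 le; apply: Sm; unfold Rdiv; apply: Rmult_le_compat_r => //.
  left; apply: Rinv_0_lt_compat; lra.
- move=> Y hY; apply: Sz; apply (Rmult_lt_reg_r (INR p)); first lra.
  have -> : Y / INR p * INR p = Y by field; lra.
  nra.
Qed.

Lemma LEVEL N (w wl : nat -> R) (G0 G1 : R -> R) p (s wp : R) : prime p ->
  (forall x, 0 <= w x) -> (forall e, 0 <= wl e) -> wl 0%N = 1 ->
  (forall e x, (0 < x)%N -> sm p x -> w (p ^ e * x)%N = wl e * w x) ->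
  \big[Rplus/0]_(e <- iota 1 N) wl e <= wp ->
  good G0 -> (forall Y, 0 <= G1 Y) -> 0 <= s ->
  (forall Y, G1 Y <= G0 Y + s * G0 (Y / INR p)) ->
  forall Y, H N w G1 p.+1 Y <= H N w G0 p Y + (s + wp + wp * s) * H N w G0 p (Y / INR p).
Proof.
move=> pp w0 wl0 w01 wm Wle gG0 G10 s0 G1le Y.
have gH0 := H_good N p w0 gG0.
have gH0' := good_div pp gH0.
have p1 : 1 < INR p by apply: (lt_INR 1); apply/ltP; exact: prime_gt1.
have H1le : forall Z, H N w G1 p Z <= H N w G0 p Z + s * H N w G0 p (Z / INR p).
  move=> Z; rewrite /H big_distrr -big_split; apply: sum_le => x xs _.
  have [xp _] := INR_pos_iota xs.
  have -> : Z / INR p / INR x = Z / INR x / INR p by field; lra.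
  have := G1le (Z / INR x); have := w0 x; simpl; nra.
apply: Rle_trans; first apply: (STEP_le N Y pp w0 wl0 G10 wm).
set W := \big[Rplus/0]_(e <- iota 1 N) wl e.
have W0 : 0 <= W by apply: sum_ge0.
apply: (@Rle_trans _ (\big[Rplus/0]_(e <- iota 0 N.+1) (wl e * H N w G0 p (Y / INR (p ^ e)))
   + s * \big[Rplus/0]_(e <- iota 0 N.+1) (wl e * H N w G0 p (Y / INR (p ^ e) / INR p)))).
  rewrite big_distrr -big_split; apply: sum_le => e _ _ /=.
  have := H1le (Y / INR (p ^ e)); have := wl0 e; nra.
have B1 := BND N Y pp gH0 wl0 w01.
have B2 := BND N Y pp gH0' wl0 w01; simpl in B2.
rewrite -/W in B1 B2.
case: gH0 => Hn Hm Hz.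
have h3 : H N w G0 p (Y / INR p / INR p) <= H N w G0 p (Y / INR p).
  case: (Rlt_le_dec Y 1) => hY.
  - rewrite (Hz (Y / INR p / INR p)); first exact: Hn.
    apply: div_lt1; last lra; apply: div_lt1; lra.
  - apply: Hm.
    have -> : Y / INR p / INR p = (Y / INR p) * / INR p by [].
    have hp : 0 < / INR p < 1.
      split; first (apply: Rinv_0_lt_compat; lra).
      rewrite -Rinv_1; apply: Rinv_lt_contravar; lra.
    have : 0 <= Y / INR p by unfold Rdiv; apply: Rmult_le_pos; lra.
    nra.
have a0 := Hn (Y / INR p); have b0 := Hn (Y / INR p / INR p).
set a := H N w G0 p (Y / INR p) in a0 B1 B2 h3 *.
set b := H N w G0 p (Y / INR p / INR p) in b0 B2 h3 *.
have h1 : W * a <= wp * a by apply: Rmult_le_compat_r.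
have h2 : s * (W * b) <= s * (wp * a).
  apply: Rmult_le_compat_l => //; apply: Rmult_le_compat => //.
move: B1 B2; simpl => B1 B2.
apply: (@Rle_trans _ (H N w G0 p Y + W * a + s * (a + W * b))); last lra.
apply: Rplus_le_compat; first exact: B1.
apply: Rmult_le_compat_l => //.
Qed.

Lemma INR_expn m n : INR (m ^ n)%N = INR m ^ n.
Proof. elim: n => [|n IH]; first by rewrite expn0. by rewrite expnS INR_muln IH. Qed.

Lemma sm_nonprime j x : ~~ prime j -> sm j.+1 x = sm j x.
Proof.
move=> nj; apply: eq_in_all => q; rewrite mem_primes => /andP [pq _].
rewrite ltnS leq_eqVlt; case: eqP => // qj; by move: nj; rewrite -qj pq.
Qed.

Lemma H_nonprime N w G j Y : ~~ prime j -> H N w G j.+1 Y = H N w G j Y.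
Proof. move=> nj; rewrite /H; apply: eq_bigl => x; exact: sm_nonprime. Qed.

Lemma H_base N w G Y : (0 < N)%N -> H N w G 0 Y = w 1%N * G Y.
Proof.
case: N => // N _; rewrite /H /= big_cons /=.
rewrite big_seq_cond big1 /=.
  have -> : Y / 1 = Y by field.
  ring.
move=> x /andP []; rewrite mem_iota => /andP [x2 _].
rewrite /sm; have : primes x != [::] by rewrite primes_eq0 -leqNgt.
by case: (primes x).
Qed.

Lemma wt_ge0 k c n : (forall p, prime p -> (k < p)%N -> 0 <= c p) -> 0 <= wt k c n.
Proof.
move=> hc; rewrite /wt; case: ifP => [/andP [co _]|]; last by move=> _; lra.
rewrite big_seq; apply: (big_ind (fun a => 0 <= a)); [lra | move=> *; apply: Rmult_le_pos => // |].
move=> p pn; apply: hc; first by move: pn; rewrite mem_primes; case/andP.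
exact: primes_gt_of_coprime pn.
Qed.

Lemma wl_ge0 k c p e : prime p -> (forall p, prime p -> (k < p)%N -> 0 <= c p) -> 0 <= wl k c p e.
Proof.
move=> pp hc; rewrite /wl; case: ifP => _; first lra.
case: ifP => _; last lra. case: ifP => kp; last lra. exact: hc.
Qed.

Lemma wl_sum N k c p : (0 < N)%N ->
  \big[Rplus/0]_(e <- iota 1 N) wl k c p e = if (k < p)%N then c p else 0.
Proof.
case: N => // N _; rewrite /= big_cons big_seq big1 ?Rplus_0_r //.
by move=> e; rewrite mem_iota => /andP [e2 _]; rewrite /wl; case: e e2 => [|[|e]].
Qed.

Lemma wt_one k c : wt k c 1 = 1.
Proof. by rewrite /wt coprime1n /= big_nil. Qed.

Definition Cw (n : nat) : R := / INR n.

Lemma geom_sum (r : R) N : r <> 1 ->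
  \big[Rplus/0]_(e <- iota 1 N) r ^ e = (r - r ^ N.+1) / (1 - r).
Proof.
move=> r1; have h : 1 - r <> 0 by lra.
elim: N => [|N IH]; first by rewrite big_nil /=; field.
have -> : iota 1 N.+1 = iota 1 N ++ [:: N.+1] by rewrite -[N.+1]addn1 iotaD addnC.
rewrite big_cat /= IH big_cons big_nil.
simpl; field; exact: h.
Qed.

Lemma Csum N p : prime p -> \big[Rplus/0]_(e <- iota 1 N) (/ INR p) ^ e <= / (INR p - 1).
Proof.
move=> pp; have p1 : 1 < INR p by apply: (lt_INR 1); apply/ltP; exact: prime_gt1.
have r0 : 0 < / INR p by apply: Rinv_0_lt_compat; lra.
have r1 : / INR p < 1 by rewrite -Rinv_1; apply: Rinv_lt_contravar; lra.
rewrite geom_sum; last lra.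
have : 0 <= (/ INR p) ^ N.+1 by apply: pow_le; lra.
have -> : / (INR p - 1) = (/ INR p) / (1 - / INR p) by field; lra.
move=> h; unfold Rdiv; apply: Rmult_le_compat_r.
  left; apply: Rinv_0_lt_compat; lra.
lra.
Qed.

Lemma C_mult p e x : (0 < x)%N -> Cw (p ^ e * x)%N = (/ INR p) ^ e * Cw x.
Proof.
move=> _; rewrite /Cw INR_muln INR_expn Rinv_mult pow_inv //.
Qed.

Definition Ind (Y : R) : R := if Rle_dec 1 Y then 1 else 0.
Lemma good_Ind : good Ind.
Proof.
rewrite /Ind; split.
- move=> Y; destruct (Rle_dec 1 Y); simpl; lra.
- move=> Y1 Y2 le; destruct (Rle_dec 1 Y1) as [h1|h1]; destruct (Rle_dec 1 Y2) as [h2|h2];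
  try apply Rnot_le_lt in h1; try apply Rnot_le_lt in h2; simpl; lra.
- move=> Y hY; destruct (Rle_dec 1 Y); simpl; lra.
Qed.

Definition cA k p := INR k / ((INR p - INR k.+1) * INR p).
Definition cB k p := INR k / (INR p - INR k).
Definition cG k p := INR k.+1 / (INR p - INR k.+1).
Definition Aw k := wt k.+1 (cA k).
Definition Bw k := wt k (cB k).
Definition Gw k := wt k.+1 (cG k).
Definition Pj N j := H N Cw Ind j.
Definition Qj N k j := H N (Bw k) (Pj N j) j.
Definition Rj N k j := H N (Aw k) (Qj N k j) j.
Definition Lj N k j := H N (Gw k) Ind j.
Definition gam k p := (if (p <= k.+1)%N then 1 - / INR p else 1) * (if p == k.+1 then / INR k.+1 else 1).
Definition cj k j := \big[Rmult/1]_(0 <= p < j) (if prime p then gam k p else 1).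

Lemma INR_lt_pos a b : (a < b)%N -> 0 < INR b - INR a.
Proof. move=> h; have : INR a < INR b by apply: lt_INR; apply/ltP. lra. Qed.

Lemma cA_ge0 k p : prime p -> (k.+1 < p)%N -> 0 <= cA k p.
Proof.
move=> pp h; rewrite /cA; have := INR_lt_pos h; have := pos_INR k.
have : 0 < INR p by apply: lt_0_INR; apply/ltP; exact: prime_gt0.
move=> *; unfold Rdiv; apply: Rmult_le_pos => //; left; apply: Rinv_0_lt_compat; nra.
Qed.
Lemma cB_ge0 k p : prime p -> (k < p)%N -> 0 <= cB k p.
Proof.
move=> pp h; rewrite /cB; have := INR_lt_pos h; have := pos_INR k.
move=> *; unfold Rdiv; apply: Rmult_le_pos => //; left; apply: Rinv_0_lt_compat; nra.
Qed.
Lemma cG_ge0 k p : prime p -> (k.+1 < p)%N -> 0 <= cG k p.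
Proof.
move=> pp h; rewrite /cG; have := INR_lt_pos h; have := pos_INR k.+1.
move=> *; unfold Rdiv; apply: Rmult_le_pos => //; left; apply: Rinv_0_lt_compat; nra.
Qed.

Lemma Cw_ge0 x : 0 <= Cw x.
Proof.
rewrite /Cw; case: (Req_dec (INR x) 0) => h; first by rewrite h Rinv_0; lra.
have := pos_INR x => ?; left; apply: Rinv_0_lt_compat; lra.
Qed.

Lemma Aw_ge0 k x : 0 <= Aw k x. Proof. apply: wt_ge0 => p pp h; exact: cA_ge0. Qed.
Lemma Bw_ge0 k x : 0 <= Bw k x. Proof. apply: wt_ge0 => p pp h; exact: cB_ge0. Qed.
Lemma Gw_ge0 k x : 0 <= Gw k x. Proof. apply: wt_ge0 => p pp h; exact: cG_ge0. Qed.

Lemma good_P N j : good (Pj N j).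
Proof. apply: H_good; [exact: Cw_ge0 | exact: good_Ind]. Qed.
Lemma good_Q N k j : good (Qj N k j).
Proof. apply: H_good; [exact: Bw_ge0 | exact: good_P]. Qed.
Lemma good_R N k j : good (Rj N k j).
Proof. apply: H_good; [exact: Aw_ge0 | exact: good_Q]. Qed.
Lemma good_L N k j : good (Lj N k j).
Proof. apply: H_good; [exact: Gw_ge0 | exact: good_Ind]. Qed.

Lemma wt_mult_sm k c p e x : prime p -> (0 < x)%N -> sm p x ->
  wt k c (p ^ e * x)%N = wl k c p e * wt k c x.
Proof.
move=> pp x0 smx; apply: wt_mult => //; apply/negP => px.
by move/allP: smx => /(_ p); rewrite mem_primes pp x0 px ltnn => /(_ isT).
Qed.

Definition wpC p := / (INR p - 1).
Definition sP p := 0 + wpC p + wpC p * 0.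
Definition bp k p := if (k < p)%N then cB k p else 0.
Definition ap k p := if (k.+1 < p)%N then cA k p else 0.
Definition sQ k p := sP p + bp k p + bp k p * sP p.
Definition sR k p := sQ k p + ap k p + ap k p * sQ k p.

Section Step.
Variables (N k p : nat).
Hypotheses (N0 : (0 < N)%N) (pp : prime p).

Lemma p1R : 1 < INR p.
Proof. apply: (lt_INR 1); apply/ltP; exact: prime_gt1. Qed.

Lemma P_step Y : Pj N p.+1 Y <= Pj N p Y + sP p * Pj N p (Y / INR p).
Proof.
have p1 := p1R.
apply: (LEVEL (wl := fun e => (/ INR p) ^ e)) => //.
- exact: Cw_ge0.
- move=> e; apply: pow_le; left; apply: Rinv_0_lt_compat; lra.
- move=> e x x0 _; exact: C_mult.
- exact: Csum.
- exact: good_Ind.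
- by case: good_Ind.
- lra.
- move=> Y'; lra.
Qed.

Lemma sP_ge0 : 0 <= sP p.
Proof. have p1 := p1R; rewrite /sP /wpC; have : 0 < / (INR p - 1) by apply: Rinv_0_lt_compat; lra. lra. Qed.
Lemma bp_ge0 : 0 <= bp k p.
Proof. rewrite /bp; case: ifP => h; [exact: cB_ge0 | lra]. Qed.
Lemma ap_ge0 : 0 <= ap k p.
Proof. rewrite /ap; case: ifP => h; [exact: cA_ge0 | lra]. Qed.

Lemma Q_step Y : Qj N k p.+1 Y <= Qj N k p Y + sQ k p * Qj N k p (Y / INR p).
Proof.
apply: (LEVEL (wl := wl k (cB k) p)) => //.
- exact: Bw_ge0.
- move=> e; apply: wl_ge0 => // q qp h; exact: cB_ge0.
- move=> e x x0 smx; exact: wt_mult_sm.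
- by rewrite wl_sum //; right.
- exact: good_P.
- by case: (good_P N p.+1).
- exact: sP_ge0.
- exact: P_step.
Qed.

Lemma sQ_ge0 : 0 <= sQ k p.
Proof. have := sP_ge0; have := bp_ge0; rewrite /sQ; nra. Qed.

Lemma R_step Y : Rj N k p.+1 Y <= Rj N k p Y + sR k p * Rj N k p (Y / INR p).
Proof.
apply: (LEVEL (wl := wl k.+1 (cA k) p)) => //.
- exact: Aw_ge0.
- move=> e; apply: wl_ge0 => // q qp h; exact: cA_ge0.
- move=> e x x0 smx; exact: wt_mult_sm.
- by rewrite wl_sum //; right.
- exact: good_Q.
- by case: (good_Q N k p.+1).
- exact: sQ_ge0.
- exact: Q_step.
Qed.

Lemma L_step X : X <= INR N ->
  Lj N k p.+1 X = Lj N k p X + (if (k.+1 < p)%N then cG k p else 0) * Lj N k p (X / INR p).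
Proof.
move=> XN; rewrite /Lj (STEP_eq (wl := wl k.+1 (cG k) p)) //; last first.
  move=> e x x0 smx; exact: wt_mult_sm.
  exact: good_Ind.
case: N N0 {XN} => // N' _.
rewrite /= !big_cons big_seq big1; last first.
  by move=> e; rewrite mem_iota => /andP [e2 _]; rewrite /wl; case: e e2 => [|[|e]] //= _; ring.
rewrite /wl /= expn1.
have -> : X / 1 = X by field.
ring.
Qed.

End Step.

Lemma H_ext N w G1 G2 j Y : (forall Y, G1 Y = G2 Y) -> H N w G1 j Y = H N w G2 j Y.
Proof. move=> h; rewrite /H; apply: eq_bigr => x _; by rewrite h. Qed.

Lemma Rj_nonprime N k j X : ~~ prime j -> Rj N k j.+1 X = Rj N k j X.
Proof.
move=> nj; rewrite /Rj H_nonprime //; apply: H_ext => Y.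
rewrite /Qj H_nonprime //; apply: H_ext => Y'.
by rewrite /Pj H_nonprime.
Qed.

Lemma Lj_nonprime N k j X : ~~ prime j -> Lj N k j.+1 X = Lj N k j X.
Proof. move=> nj; by rewrite /Lj H_nonprime. Qed.

Lemma good_div_le S p Y : prime p -> good S -> S (Y / INR p) <= S Y.
Proof.
move=> pp [S0 Sm Sz]; have p1 : 1 < INR p by apply: (lt_INR 1); apply/ltP; exact: prime_gt1.
case: (Rlt_le_dec Y 1) => hY.
  rewrite Sz; [exact: S0 | apply: div_lt1; lra].
apply: Sm; apply (Rmult_le_reg_r (INR p)); first lra.
have -> : Y / INR p * INR p = Y by field; lra.
nra.
Qed.

Lemma alg1 k p : prime p -> (k.+1 < p)%N -> sR k p <= cG k p.
Proof.
move=> pp h; rewrite /sR /sQ /sP /wpC /ap /bp h ltnW // /cA /cB /cG.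
have hk := INR_lt_pos h.
have hk' : (k < p)%N by apply: ltnW.
have := INR_lt_pos hk'.
rewrite S_INR in hk * => h1.
have p0 : 0 < INR p - 1.
  have := pos_INR k; lra.
right; field; repeat split; lra.
Qed.

Lemma alg2 k p : prime p -> (p <= k.+1)%N -> gam k p * (1 + sR k p) = 1.
Proof.
move=> pp h; have p1 : 1 < INR p by apply: (lt_INR 1); apply/ltP; exact: prime_gt1.
rewrite leq_eqVlt in h; case/orP: h => [/eqP pK | h].
  subst p; rewrite /gam /sR /sQ /sP /wpC /ap /bp leqnn eqxx ltnn /cB S_INR.
  rewrite S_INR in p1.
  have -> : INR k + 1 - INR k = 1 by ring.
  field; lra.
have e1 : (p <= k.+1)%N by apply: ltnW.
have e2 : (k < p)%N = false by apply/negbTE; rewrite -leqNgt -ltnS.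
have e3 : (p == k.+1) = false by apply/negbTE; rewrite neq_ltn h.
have e4 : (k.+1 < p)%N = false by apply/negbTE; rewrite -leqNgt.
rewrite /gam /sR /sQ /sP /wpC /ap /bp e1 e2 e3 e4.
field; lra.
Qed.

Lemma gam_ge0 k p : prime p -> 0 <= gam k p.
Proof.
move=> pp; have p1 : 1 < INR p by apply: (lt_INR 1); apply/ltP; exact: prime_gt1.
have : / INR p < 1 by rewrite -Rinv_1; apply: Rinv_lt_contravar; lra.
have : 0 < / INR k.+1 by apply: Rinv_0_lt_compat; apply: lt_0_INR; apply/ltP.
rewrite /gam; case: ifP => _; case: ifP => _; move=> *; nra.
Qed.

Lemma cj_ge0 k j : 0 <= cj k j.
Proof.
rewrite /cj; apply: (big_ind (fun a => 0 <= a)); [lra | move=> *; apply: Rmult_le_pos => // |].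
move=> p _; case: ifP => pp; [exact: gam_ge0 | lra].
Qed.

Lemma INV N k : (0 < N)%N -> forall j X, X <= INR N -> cj k j * Rj N k j X <= Lj N k j X.
Proof.
move=> N0; elim => [|j IH] X XN.
  rewrite /cj big_geq // /Rj /Lj !H_base // /Qj H_base // /Pj H_base //.
  rewrite /Aw /Bw /Gw !wt_one /Cw /=; rewrite Rinv_1; right; ring.
rewrite /cj big_nat_recr //= -/(cj k j).
have c0 := cj_ge0 k j.
case: (boolP (prime j)) => pj; last first.
  rewrite Rj_nonprime // Lj_nonprime //; rewrite Rmult_1_r; exact: IH.
have hR := R_step k N0 pj X.
have hL := L_step k N0 pj XN.
have [R0 _ _] := good_R N k j.
have XpN : X / INR j <= INR N.
  have p1 : 1 < INR j by apply: (lt_INR 1); apply/ltP; exact: prime_gt1.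
  have := pos_INR N.
  case: (Rle_lt_dec X 0) => hX.
    have : X / INR j <= 0.
      unfold Rdiv; apply: Rmult_le_0_r => //; left; apply: Rinv_0_lt_compat; lra.
    lra.
  have : X / INR j <= X.
    apply (Rmult_le_reg_r (INR j)); first lra.
    have -> : X / INR j * INR j = X by field; lra.
    nra.
  lra.
have IH1 := IH X XN.
have IH2 := IH (X / INR j) XpN.
have sR0 : 0 <= sR k j by rewrite /sR; have := sQ_ge0 k pj; have := ap_ge0 k pj; nra.
case: (ltnP k.+1 j) => kj.
- have g1 : gam k j = 1.
    rewrite /gam.
    have -> : (j <= k.+1)%N = false by apply/negbTE; rewrite -ltnNge.
    have -> : (j == k.+1) = false by apply/negbTE; rewrite eq_sym neq_ltn kj.
    ring.
  rewrite kj in hL; rewrite g1 hL.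
  have a1 := alg1 pj kj.
  have := R0 (X / INR j); have := R0 X; move=> r1 r2.
  have : cj k j * (sR k j * Rj N k j (X / INR j)) <= cG k j * Lj N k j (X / INR j).
    apply: (@Rle_trans _ (sR k j * Lj N k j (X / INR j))).
      rewrite -Rmult_assoc (Rmult_comm _ (sR k j)) Rmult_assoc.
      by apply: Rmult_le_compat_l.
    apply: Rmult_le_compat_r => //; by case: (good_L N k j).
  move=> h3.
  apply: (@Rle_trans _ (cj k j * (Rj N k j X + sR k j * Rj N k j (X / INR j)))).
    rewrite Rmult_1_r; by apply: Rmult_le_compat_l.
  lra.
- have kj' : (k.+1 < j)%N = false by apply/negbTE; rewrite -leqNgt.
  rewrite kj' Rmult_0_l Rplus_0_r in hL; rewrite hL.
  have a2 := alg2 pj kj.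
  have g0 := gam_ge0 k pj.
  have hd := good_div_le X pj (good_R N k j).
  apply: (@Rle_trans _ (cj k j * (gam k j * (1 + sR k j)) * Rj N k j X)); last by rewrite a2 Rmult_1_r.
  have : Rj N k j.+1 X <= (1 + sR k j) * Rj N k j X by nra.
  move=> h; apply: (@Rle_trans _ (cj k j * gam k j * ((1 + sR k j) * Rj N k j X))); last by right; ring.
  apply: Rmult_le_compat_l => //; exact: Rmult_le_pos.
Qed.

Lemma INR_up_nat t : 0 <= t -> t < INR (Z.to_nat (up t)).
Proof.
move=> t0; have [h1 _] := archimed t.
rewrite INR_IZR_INZ Z2Nat.id //.
apply: le_IZR; lra.
Qed.

Lemma sum_filter_ext (f : nat -> R) t N d : t <= INR N ->
  \big[Rplus/0]_(q <- iota 1 N | nat_le_R q t) f q =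
  \big[Rplus/0]_(q <- iota 1 (N + d) | nat_le_R q t) f q.
Proof.
move=> tN; rewrite iotaD big_cat /=.
have -> : \big[Rplus/0]_(q <- iota (1 + N) d | nat_le_R q t) f q = 0; last by ring.
rewrite big_seq_cond big1 // => q /andP [].
rewrite mem_iota => /andP [q1 _]; rewrite /nat_le_R; case: Rle_dec => // h _.
have : INR N.+1 <= INR q by apply: le_INR; apply/leP; rewrite -(add1n N).
rewrite S_INR; lra.
Qed.

Lemma sum_filter_ext2 (f : nat -> R) t N M : t <= INR N -> t <= INR M ->
  \big[Rplus/0]_(q <- iota 1 N | nat_le_R q t) f q =
  \big[Rplus/0]_(q <- iota 1 M | nat_le_R q t) f q.
Proof.
move=> tN tM; case: (leqP N M) => h.
  by rewrite (sum_filter_ext f (M - N) tN) subnKC.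
by rewrite [RHS](sum_filter_ext f (N - M) tM) subnKC // ltnW.
Qed.

Lemma nat_le_R_Ind q t : (0 < q)%N -> (if nat_le_R q t then 1 else 0) = Ind (t / INR q).
Proof.
move=> q0; have qp : 0 < INR q by apply: lt_0_INR; apply/ltP.
rewrite /nat_le_R /Ind; case: Rle_dec => h1; case: Rle_dec => h2 //.
- exfalso; apply: h2; apply (Rmult_le_reg_r (INR q)) => //.
  have -> : t / INR q * INR q = t by field; lra. lra.
- exfalso; apply: h1; apply (Rmult_le_reg_r (/ INR q)); first by apply: Rinv_0_lt_compat.
  have -> : INR q * / INR q = 1 by field; lra. exact: h2.
Qed.

Lemma Fk_iota k t N : 0 <= t -> t <= INR N ->
  Fk k t = \big[Rplus/0]_(q <- iota 1 N) (wt k (fun p => INR k / (INR p - INR k)) q * Ind (t / INR q)).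
Proof.
move=> t0 tN; rewrite /Fk Rsum_big big_filter /nats_upto big_filter_cond.
rewrite (eq_bigl (fun q => nat_le_R q t && coprime q (Pprod k))) //.
rewrite big_mkcondr.
have -> : \big[Rplus/0]_(i <- iota 1 (Z.to_nat (up t)) | nat_le_R i t)
    (if coprime i (Pprod k) then mu2 i * Rprod_seq (primes i) (fun p => INR k / (INR p - INR k)) else 0)
  = \big[Rplus/0]_(i <- iota 1 (Z.to_nat (up t)) | nat_le_R i t) (wt k (fun p => INR k / (INR p - INR k)) i).
  apply: eq_bigr => i _; rewrite /wt /mu2 Rprod_big; case: coprime => /=; last by [].
  case: squarefree => /=; ring.
rewrite (sum_filter_ext2 _ (N := Z.to_nat (up t)) (M := N)) //; last by left; exact: INR_up_nat.
rewrite big_mkcond big_seq [RHS]big_seq; apply: eq_bigr => q; rewrite mem_iota => /andP [q1 _].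
rewrite -nat_le_R_Ind //; case: nat_le_R; ring.
Qed.

Lemma is_RInt_val (f : R -> R) a b l l' : is_RInt f a b l -> l = l' -> is_RInt f a b l'.
Proof. by move=> h <-. Qed.

Lemma is_RInt_zero (f : R -> R) a b : (forall x, Rmin a b < x < Rmax a b -> f x = 0) ->
  is_RInt f a b 0.
Proof.
move=> h; apply: (is_RInt_ext (fun _ => 0)); first by move=> x hx; rewrite h.
apply: is_RInt_val; first exact: is_RInt_const.
exact: scal_zero_r.
Qed.

Definition Jq (q : nat) (Y : R) : R := if Rle_dec (INR q) Y then ln (Y / INR q) else 0.

Lemma piece (b : R) (q : nat) Y : (0 < q)%N -> 1 <= Y ->
  is_RInt (fun t => b * Ind (t / INR q) * / t) 1 Y (b * Jq q Y).
Proof.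
move=> q0 Y1; have Q1 : 1 <= INR q by apply: (le_INR 1); apply/leP.
have Ind0 : forall x, 0 < x < INR q -> Ind (x / INR q) = 0.
  move=> x hx; rewrite /Ind; case: Rle_dec => // h; exfalso.
  have : x / INR q < 1.
    apply (Rmult_lt_reg_r (INR q)); first lra.
    have -> : x / INR q * INR q = x by field; lra. lra.
  lra.
rewrite /Jq; case: Rle_dec => hQ; last first.
  apply: is_RInt_val; first apply: is_RInt_zero.
    move=> x; rewrite Rmin_left ?Rmax_right; try lra. move=> hx.
    rewrite Ind0; [ring | lra].
  simpl; ring.
apply: is_RInt_val.
  apply: (is_RInt_Chasles _ 1 (INR q) Y).
    apply: is_RInt_zero => x; rewrite Rmin_left ?Rmax_right; try lra. move=> hx.
    rewrite Ind0; [ring | lra].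
  apply: (is_RInt_ext (fun t => b * / t)).
    move=> x; rewrite Rmin_left ?Rmax_right; try lra. move=> hx.
    rewrite /Ind; case: Rle_dec => h /=; first ring.
    exfalso; apply: h; apply (Rmult_le_reg_r (INR q)); first lra.
    have -> : x / INR q * INR q = x by field; lra. lra.
  apply: (is_RInt_derive (fun t => b * ln t)).
    move=> x; rewrite Rmin_left ?Rmax_right; try lra. move=> hx.
    auto_derive; first lra. field; lra.
  move=> x; rewrite Rmin_left ?Rmax_right; try lra. move=> hx.
  apply (@ex_derive_continuous R_AbsRing R_NormedModule (fun t => b * / t)).
  auto_derive; lra.
simpl; rewrite ln_div; try lra.
rewrite /minus /plus /opp /=. ring.
Qed.

Lemma is_RInt_sumseq (s : seq nat) (f : nat -> R -> R) (v : nat -> R) a b :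
  (forall q, q \in s -> is_RInt (f q) a b (v q)) ->
  is_RInt (fun t => \big[Rplus/0]_(q <- s) f q t) a b (\big[Rplus/0]_(q <- s) v q).
Proof.
elim: s => [|x s IH] h.
  apply: (is_RInt_ext (fun _ => 0)); first by move=> t _; rewrite big_nil.
  rewrite big_nil; apply: is_RInt_val; [exact: is_RInt_const | exact: scal_zero_r].
apply: (is_RInt_ext (fun t => plus (f x t) (\big[Rplus/0]_(q <- s) f q t))).
  by move=> t _; rewrite big_cons.
rewrite big_cons; apply: is_RInt_plus.
  by apply: h; rewrite in_cons eqxx.
apply: IH => q qs; apply: h; by rewrite in_cons qs orbT.
Qed.

Lemma RInt_Fk k N Y : 1 <= Y -> Y <= INR N ->
  RInt (fun t => Fk k t / t) 1 Y =
  \big[Rplus/0]_(q <- iota 1 N) (wt k (fun p => INR k / (INR p - INR k)) q * Jq q Y).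
Proof.
move=> Y1 YN; apply: is_RInt_unique.
apply: (is_RInt_ext (fun t => \big[Rplus/0]_(q <- iota 1 N)
          (wt k (fun p => INR k / (INR p - INR k)) q * Ind (t / INR q) * / t))).
  move=> x; rewrite Rmin_left ?Rmax_right; try lra. move=> hx.
  rewrite (Fk_iota k (N := N)); try lra.
  rewrite /Rdiv big_distrl; by [].
apply: is_RInt_sumseq => q; rewrite mem_iota => /andP [q1 _].
exact: piece.
Qed.

Lemma ln1p_le x : 0 < x -> ln (1 + x) <= x.
Proof.
move=> x0; have := exp_ineq1 x; move=> h; left.
rewrite -{2}(ln_exp x); apply: ln_increasing; first lra.
apply: h; lra.
Qed.

Lemma HARM N u : 1 <= u ->
  ln (Rmin u (INR N + 1)) <= \big[Rplus/0]_(n <- iota 1 N) (Cw n * Ind (u / INR n)).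
Proof.
move=> u1; elim: N => [|N IH].
  rewrite big_nil /= Rplus_0_l Rmin_right // ln_1; lra.
have -> : iota 1 N.+1 = iota 1 N ++ [:: N.+1] by rewrite -[N.+1]addn1 iotaD addnC.
rewrite big_cat big_cons big_nil.
set S := \big[Rplus/0]_(n <- iota 1 N) (Cw n * Ind (u / INR n)) in IH *.
have Np : 0 < INR N + 1 by have := pos_INR N; lra.
rewrite /Cw /Ind S_INR.
case: (Rle_dec (INR N + 1) u) => hu.
- have h : 1 <= u / (INR N + 1).
    apply (Rmult_le_reg_r (INR N + 1)) => //.
    have -> : u / (INR N + 1) * (INR N + 1) = u by field; lra. lra.
  case: Rle_dec => // _ /=.
  rewrite Rmin_right in IH; last lra.
  apply: (@Rle_trans _ (ln (INR N + 1 + 1))).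
    apply: ln_le; first by apply: Rmin_pos; lra.
    apply: Rmin_r.
  have : ln (INR N + 1 + 1) = ln (INR N + 1) + ln (1 + / (INR N + 1)).
    rewrite -ln_mult; try lra.
      congr ln; field; lra.
    have : 0 < / (INR N + 1) by apply: Rinv_0_lt_compat.
    lra.
  have := ln1p_le (Rinv_0_lt_compat _ Np).
  move=> *; lra.
- have hu' : u < INR N + 1 by apply: Rnot_le_lt.
  case: Rle_dec => h /=.
    exfalso; apply: hu; apply (Rmult_le_reg_r (/ (INR N + 1))); first by apply: Rinv_0_lt_compat.
    have -> : (INR N + 1) * / (INR N + 1) = 1 by field; lra. exact: h.
  rewrite Rmin_left in IH; last lra.
  rewrite Rmin_left; last lra.
  lra.
Qed.

Lemma sqf_pos l : squarefree l -> (0 < l)%N.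
Proof. by case/andP. Qed.

Lemma sqf_logn l p : squarefree l -> p \in primes l -> logn p l = 1%N.
Proof. by case/andP => _ /allP h /h /eqP. Qed.

Lemma sqf_div_eq d e l : squarefree l -> (0 < d)%N -> (0 < e)%N -> (d %| l)%N -> (e %| l)%N ->
  (forall p, prime p -> (p %| d) = (p %| e))%N -> d = e.
Proof.
move=> sq d0 e0 dl el h.
have l0 := sqf_pos sq.
have pe : primes d = primes e.
  apply/eq_primes => p; rewrite !mem_primes d0 e0 /=; case pp: (prime p) => //=; exact: h.
have lg : forall x, (0 < x)%N -> (x %| l)%N -> forall p, p \in primes x -> logn p x = 1%N.
  move=> x x0 xl p px; apply/eqP; rewrite eqn_leq; apply/andP; split.
    rewrite -(sqf_logn sq (p := p)); first exact: dvdn_leq_log.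
    move: px; rewrite !mem_primes l0 => /and3P [-> _ pd] /=; exact: dvdn_trans pd xl.
  by rewrite logn_gt0.
have Px x : (0 < x)%N -> x = (\prod_(p <- primes x) p ^ logn p x)%N.
  by move=> x0; rewrite {1}(prod_prime_decomp x0) prime_decompE big_map.
rewrite (Px d d0) (Px e e0) pe.
apply: eq_big_seq => p pin /=; rewrite (lg e) // (lg d) // pe //.
Qed.

Lemma tau_le k l : (0 < k)%N -> squarefree l -> (tau k l <= k ^ size (primes l))%N.
Proof.
case: k => // k' _ sq.
have l0 := sqf_pos sq.
set ps := primes l.
pose f := fun t : k'.+1.-tuple 'I_l.+1 =>
  [ffun i : 'I_(size ps) => (inord (find (fun d : 'I_l.+1 => nth 0%N ps i %| d)%N t) : 'I_k'.+1)].
have A1 : forall u : k'.+1.-tuple 'I_l.+1, (\prod_(i <- u) (i : nat))%N = l ->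
    forall j, (0 < tnth u j)%N && (tnth u j %| l)%N.
  move=> u Pu j.
  have E' : (\prod_(i <- u) (i : nat))%N = (tnth u j * \prod_(j' < k'.+1 | j' != j) tnth u j')%N.
    by rewrite big_tuple (bigD1 j).
  have E : l = (tnth u j * \prod_(j' < k'.+1 | j' != j) tnth u j')%N by rewrite -E' Pu.
  apply/andP; split.
    have l0' : (0 < tnth u j * \prod_(j' < k'.+1 | j' != j) tnth u j')%N by rewrite -E.
    by move: l0'; rewrite muln_gt0 => /andP [].
  have := dvdn_mulr (\prod_(j' < k'.+1 | j' != j) tnth u j') (dvdnn (tnth u j)).
  by rewrite -E.
have A2 : forall u : k'.+1.-tuple 'I_l.+1, (\prod_(i <- u) (i : nat))%N = l ->
    forall p j1 j2, prime p -> (p %| tnth u j1)%N -> (p %| tnth u j2)%N -> j1 = j2.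
  move=> u Pu p j1 j2 pp h1 h2; apply/eqP; apply/negPn/negP => ne.
  have E' : (\prod_(i <- u) (i : nat))%N = (tnth u j1 * (tnth u j2 * \prod_(j' < k'.+1 | (j' != j1) && (j' != j2)) tnth u j'))%N.
    rewrite big_tuple (bigD1 j1) //= (bigD1 j2) /=; last by rewrite eq_sym ne.
    congr (_ * (_ * _))%N; apply: eq_bigl => j; by rewrite andbC.
  have E : l = (tnth u j1 * (tnth u j2 * \prod_(j' < k'.+1 | (j' != j1) && (j' != j2)) tnth u j'))%N by rewrite -E' Pu.
  have : (p ^ 2 %| l)%N.
    rewrite E expnS expn1; apply: dvdn_mul => //; exact: dvdn_mulr.
  rewrite pfactor_dvdn // (sqf_logn sq) //.
  rewrite mem_primes pp l0 /=; apply: dvdn_trans h1 _.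
  have := dvdn_mulr (tnth u j2 * \prod_(j' < k'.+1 | (j' != j1) && (j' != j2)) tnth u j') (dvdnn (tnth u j1)).
  by rewrite -E.
have A3 : forall u : k'.+1.-tuple 'I_l.+1, (\prod_(i <- u) (i : nat))%N = l ->
    forall p (j : 'I_k'.+1), prime p -> (p %| tnth u j)%N ->
    find (fun d : 'I_l.+1 => p %| d)%N u = j.
  move=> u Pu p j pp pj.
  have hs : has (fun d : 'I_l.+1 => p %| d)%N u by apply/hasP; exists (tnth u j) => //; exact: mem_tnth.
  have ms : (find (fun d : 'I_l.+1 => p %| d)%N u < k'.+1)%N by move: hs; rewrite has_find size_tuple.
  have := nth_find ord0 hs; rewrite -(tnth_nth ord0 u (Ordinal ms)) => pm.
  by have := A2 u Pu p _ _ pp pm pj => <-.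
have A4 : forall u : k'.+1.-tuple 'I_l.+1, (\prod_(i <- u) (i : nat))%N = l ->
    forall p, prime p -> (p %| l)%N -> has (fun d : 'I_l.+1 => p %| d)%N u.
  move=> u Pu p pp pl.
  have : (p %| \prod_(i <- u) (i : nat))%N by rewrite Pu.
  by rewrite Euclid_dvd_prod // big_has.
have B : forall t s : k'.+1.-tuple 'I_l.+1, (\prod_(i <- t) (i : nat))%N = l ->
    (\prod_(i <- s) (i : nat))%N = l -> f t = f s ->
    forall j p, prime p -> (p %| tnth t j)%N -> (p %| tnth s j)%N.
  move=> t s Pt Ps ft j p pp pj.
  have pl : (p %| l)%N by apply: dvdn_trans pj _; case/andP: (A1 t Pt j).
  have pin : p \in ps by rewrite mem_primes pp l0.
  have im : (index p ps < size ps)%N by rewrite index_mem.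
  have := congr1 (fun g : {ffun 'I_(size ps) -> 'I_k'.+1} => g (Ordinal im)) ft; rewrite !ffunE /= (nth_index 0%N pin).
  rewrite (A3 t Pt p j pp pj).
  have hs := A4 s Ps p pp pl.
  have ms : (find (fun d : 'I_l.+1 => p %| d)%N s < k'.+1)%N by move: hs; rewrite has_find size_tuple.
  move=> /(congr1 val); rewrite /= !inordK // => e.
  have := nth_find ord0 hs; rewrite -e -tnth_nth; by [].
rewrite /tau.
rewrite -(card_in_imset (f := f)); last first.
  move=> t s; rewrite !inE => /eqP Pt /eqP Ps ft.
  apply: eq_from_tnth => j; apply: val_inj.
  case/andP: (A1 t Pt j) => t0 tl; case/andP: (A1 s Ps j) => s0 sl.
  apply: (sqf_div_eq sq) => // p pp; apply/idP/idP; first exact: B.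
  exact: (B s t Ps Pt (esym ft)).
apply: leq_trans (max_card _) _.
by rewrite card_ffun !card_ord.
Qed.

Lemma INR_prod (T : Type) (s : seq T) (P : pred T) (F : T -> nat) :
  INR (\prod_(i <- s | P i) F i)%N = \big[Rmult/1]_(i <- s | P i) INR (F i).
Proof.
elim: s => [|a s IH]; first by rewrite !big_nil.
rewrite !big_cons; case: (P a) => //; by rewrite INR_muln IH.
Qed.

Lemma prod_const (T : Type) (s : seq T) c : \big[Rmult/1]_(i <- s) c = c ^ size s.
Proof. elim: s => [|a s IH]; first by rewrite big_nil. by rewrite big_cons IH. Qed.

Lemma prod_frac (T : Type) (s : seq T) (a b c : T -> R) :
  \big[Rmult/1]_(i <- s) (a i / (b i * c i)) =
  \big[Rmult/1]_(i <- s) a i / (\big[Rmult/1]_(i <- s) b i * \big[Rmult/1]_(i <- s) c i).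
Proof.
elim: s => [|x s IH]; first by rewrite !big_nil /=; field.
rewrite !big_cons IH /=; rewrite /Rdiv !Rinv_mult; ring.
Qed.

Lemma sqf_prod l : squarefree l -> l = (\prod_(p <- primes l) p)%N.
Proof.
move=> sq; have l0 := sqf_pos sq.
rewrite {1}(prod_prime_decomp l0) prime_decompE big_map.
by apply: eq_big_seq => p pin /=; rewrite (sqf_logn sq pin) expn1.
Qed.

Lemma coef_le k l : (0 < k)%N -> (0 < l)%N -> coprime l (Pprod k.+1) ->
  0 <= mu2 l * INR (tau k l) / (INR (psi k.+1 l) * INR l) <= Aw k l.
Proof.
move=> k0 l0 co.
rewrite /Aw /wt co /mu2 /=.
case sq: (squarefree l); last first.
  rewrite Rmult_0_l /Rdiv Rmult_0_l; lra.
have pg : forall p, p \in primes l -> (k.+1 < p)%N by move=> p; apply: primes_gt_of_coprime.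
have Hpsi : INR (psi k.+1 l) = \big[Rmult/1]_(p <- primes l) (INR p - INR k.+1).
  rewrite /psi INR_prod big_seq_cond [RHS]big_seq.
  rewrite (eq_bigl (fun p => p \in primes l)); last by move=> p; case pl: (p \in primes l) => //=; rewrite pg.
  apply: eq_bigr => p pl; rewrite minus_INR //; apply/leP; apply: ltnW; exact: pg.
have Hl : INR l = \big[Rmult/1]_(p <- primes l) INR p by rewrite {1}(sqf_prod sq) INR_prod.
have Ht : INR (tau k l) <= \big[Rmult/1]_(p <- primes l) INR k.
  rewrite prod_const -INR_expn; apply: le_INR; apply/leP; exact: tau_le.
have D1 : 0 < \big[Rmult/1]_(p <- primes l) (INR p - INR k.+1).
  rewrite big_seq; apply: (big_ind (fun a => 0 < a)); [lra | move=> *; apply: Rmult_lt_0_compat => // |].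
  move=> p pl; exact: INR_lt_pos (pg p pl).
have D2 : 0 < INR l by apply: lt_0_INR; apply/ltP.
rewrite Hpsi /cA prod_frac -Hl.
set D := \big[Rmult/1]_(p <- primes l) (INR p - INR k.+1) in D1 *.
have iD : 0 < / (D * INR l) by apply: Rinv_0_lt_compat; nra.
have := pos_INR (tau k l).
split; rewrite /Rdiv; nra.
Qed.

Lemma H_full N w G Y : H N w G N.+1 Y = \big[Rplus/0]_(x <- iota 1 N) (w x * G (Y / INR x)).
Proof.
rewrite /H big_seq_cond [RHS]big_seq; apply: eq_bigl => x.
case xi: (x \in iota 1 N) => //=.
move: xi; rewrite mem_iota => /andP [x1 xN].
apply/allP => p; rewrite mem_primes => /and3P [_ _ px].
have := dvdn_leq x1 px; lia.
Qed.

Lemma Pprod_pos k : (0 < Pprod k)%N.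
Proof.
rewrite /Pprod; apply: (big_ind (fun a => 0 < a)%N) => //.
  by move=> a b ha hb; rewrite muln_gt0 ha hb.
move=> i; exact: prime_gt0.
Qed.

Lemma Pprod_S k : Pprod k.+1 = (Pprod k * (if prime k.+1 then k.+1 else 1))%N.
Proof.
rewrite /Pprod big_mkcond big_ord_recr /= -big_mkcond /=.
by case: (prime k.+1); rewrite ?muln1.
Qed.

Lemma const_eq k N : (k.+1 <= N)%N ->
  INR (Pprod k) / INR (Pprod k.+1)
     * Rprod_seq [seq p <- iota 0 k.+2 | prime p] (fun p => 1 - / INR p) = cj k N.+1.
Proof.
move=> kN.
have P0 : 0 < INR (Pprod k) by apply: lt_0_INR; apply/ltP; exact: Pprod_pos.
have B1 : INR (Pprod k) / INR (Pprod k.+1) = if prime k.+1 then / INR k.+1 else 1.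
  rewrite Pprod_S INR_muln; case: (prime k.+1).
    have : 0 < INR k.+1 by apply: lt_0_INR; apply/ltP.
    move=> h; field; lra.
  simpl; field; lra.
rewrite B1 /cj Rprod_big big_filter.
have E : forall p, (if prime p then gam k p else 1) =
   (if prime p then (if (p <= k.+1)%N then 1 - / INR p else 1) else 1) *
   (if prime p then (if p == k.+1 then / INR k.+1 else 1) else 1).
  move=> p; rewrite /gam; case: (prime p) => //; ring.
rewrite (eq_bigr _ (fun p _ => E p)) big_split.
rewrite Rmult_comm; congr (_ * _).
  rewrite [RHS](big_cat_nat _ (n := k.+2)) //.
  rewrite [X in _ = _ * X]big1_seq ?Rmult_1_r; last first.
    move=> p /andP [_]; rewrite mem_index_iota => /andP [h _]; case: (prime p) => //.
    by rewrite leqNgt h.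
  rewrite [LHS]big_mkcond /index_iota subn0; apply: eq_big_seq => p.
  rewrite mem_iota => /andP [_ h]; case: (prime p) => //; by rewrite -ltnS h.
have kin : k.+1 \in index_iota 0 N.+1 by rewrite mem_index_iota.
rewrite (bigD1_seq k.+1) ?iota_uniq // eqxx big1_seq ?Rmult_1_r //.
  exact: (esym (Rmult_1_r _)).
move=> p /andP [/negbTE -> _]; by case: (prime p).
Qed.

Lemma Jq_le N q Y : (0 < q)%N -> Y <= INR N -> Jq q Y <= Pj N N.+1 (Y / INR q).
Proof.
move=> q0 YN; have Q1 : 1 <= INR q by apply: (le_INR 1); apply/leP.
rewrite /Jq; case: Rle_dec => h /=; last by case: (good_P N N.+1).
rewrite /Pj H_full.
have u1 : 1 <= Y / INR q.
  apply (Rmult_le_reg_r (INR q)); first lra.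
  have -> : Y / INR q * INR q = Y by field; lra. lra.
have uN : Y / INR q <= INR N.
  apply (Rmult_le_reg_r (INR q)); first lra.
  have -> : Y / INR q * INR q = Y by field; lra. nra.
have := HARM N u1; rewrite Rmin_left //; lra.
Qed.

Lemma RInt_le k N Y : 1 <= Y -> Y <= INR N -> RInt (fun t => Fk k t / t) 1 Y <= Qj N k N.+1 Y.
Proof.
move=> Y1 YN; rewrite (RInt_Fk k (N := N)) // /Qj H_full.
apply: sum_le => q; rewrite mem_iota => /andP [q1 _] _.
apply: Rmult_le_compat_l; first exact: (Bw_ge0 k q).
exact: Jq_le.
Qed.

Unset Implicit Arguments.

Theorem mainTheorem8 (kappa : nat) (z : R) :
  (1 <= kappa)%N -> (1 <= z)%R ->
  (Fk kappa.+1 z >=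
     INR (Pprod kappa) / INR (Pprod kappa.+1)
     * Rprod_seq [seq p <- iota 0 kappa.+2 | prime p] (fun p => 1 - / INR p)
     * Rsum_seq [seq l <- nats_upto z | coprime l (Pprod kappa.+1)]
         (fun l => mu2 l * INR (tau kappa l) / (INR (psi kappa.+1 l) * INR l)
                   * RInt (fun t => Fk kappa t / t) 1 (z / INR l)))%R.
Proof.
move=> k1 z1.
set M := Z.to_nat (up z).
have zM : z < INR M by apply: INR_up_nat; lra.
set N := maxn M kappa.+1.
have zN : z < INR N.
  apply: (Rlt_le_trans _ _ _ zM); apply: le_INR; apply/leP; exact: leq_maxl.
have N0 : (0 < N)%N by rewrite /N leq_max ltn0Sn orbT.
have kN : (kappa.+1 <= N)%N by exact: leq_maxr.
apply: Rle_ge.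
rewrite (const_eq kN).
have hL : Fk kappa.+1 z = Lj N kappa N.+1 z.
  by rewrite (Fk_iota kappa.+1 (N := N)) ?/Lj ?H_full; try lra.
rewrite hL.
apply: Rle_trans; last exact: (INV kappa N0 N.+1 (Rlt_le _ _ zN)).
apply: Rmult_le_compat_l; first exact: cj_ge0.
rewrite Rsum_big big_filter /nats_upto big_filter_cond -/M big_mkcondr.
rewrite (sum_filter_ext2 _ (N := M) (M := N)); [|lra|lra].
rewrite -big_mkcondr big_mkcond.
rewrite /Rj H_full; apply: sum_le => l; rewrite mem_iota => /andP [l1 lN] _.
have l0 : (0 < l)%N by [].
have lp : 0 < INR l by apply: lt_0_INR; apply/ltP.
have Ql0 : 0 <= Qj N kappa N.+1 (z / INR l) by case: (good_Q N kappa N.+1).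
case: (boolP (nat_le_R l z && coprime l (Pprod kappa.+1))) => [/andP [hz co]|_]; last first.
  apply: Rmult_le_pos => //; exact: Aw_ge0.
have [c0 cA] := coef_le k1 l0 co.
have lz : INR l <= z by move: hz; rewrite /nat_le_R; case: Rle_dec.
have Y1 : 1 <= z / INR l.
  apply (Rmult_le_reg_r (INR l)) => //.
  have -> : z / INR l * INR l = z by field; lra. lra.
have YN : z / INR l <= INR N.
  have : 1 <= INR l by apply: (le_INR 1); apply/leP.
  move=> h; apply (Rmult_le_reg_r (INR l)) => //.
  have -> : z / INR l * INR l = z by field; lra. nra.
have hI := RInt_le kappa Y1 YN.
apply: (@Rle_trans _ (mu2 l * INR (tau kappa l) / (INR (psi kappa.+1 l) * INR l) * Qj N kappa N.+1 (z / INR l))).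
  by apply: Rmult_le_compat_l.
by apply: Rmult_le_compat_r.
Qed.
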